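(* Let $\theta$ be a real number with $0<\theta<\tfrac{3\pi}{2}$. In the Cartesian plane let $O=(0,0)$, let $OA$ be the positive $x$-axis, and let $OB$ be the ray from $O$ making polar angle $\theta$ with $OA$, i.e. $OB=\{t(\cos\theta,\sin\theta): t\ge 0\}$. Let $l$ be the line $y=1$. Consider points $C, D, E$ satisfying: (i) $C=(c,1)\in l$ with $c>0$; (ii) $D$ lies on the ray $OB$; (iii) $|CD|=2$ and $E$ is the midpoint of the segment $CD$; (iv) the line $OE$ is perpendicular to the line $CD$, i.e. $E\cdot(D-C)=0$; (v) $E$ lies strictly on the counterclockwise side of the line $OC$, i.e. $\det(C,E)=c\,e_2-e_1>0$ where $E=(e_1,e_2)$. Then such points $C,D,E$ exist, and for any such points the ray $OC$ has polar angle $\theta/3$ and the ray $OE$ has polar angle $2\theta/3$; that is, the rays $OC$ and $OE$ trisect the angle $\angle AOB$.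
   Context: This formalizes Scudder's carpenter's-square (T-square) trisection: the tool is a T whose top is a segment $CD$ of length $2$ and whose stem is the perpendicular to $CD$ through its midpoint $E$; the tool is placed so that the stem passes through the vertex $O$, the endpoint $C$ lies on the line parallel to $OA$ at distance $1$, and the endpoint $D$ lies on $OB$. The polar angle of a nonzero point is its argument measured counterclockwise from the positive $x$-axis. *)

(* Defs.v *)
From Stdlib Require Import Reals.
Open Scope R_scope.

Definition point := (R * R)%type.

Definition norm (P : point) : R := sqrt (fst P ^ 2 + snd P ^ 2).

Definition dist (P Q : point) : R := norm (fst Q - fst P, snd Q - snd P).

Definition polar_angle (P : point) (a : R) : Prop :=
  P <> (0, 0) /\ 0 <= a < 2 * PI /\
  fst P = norm P * cos a /\ snd P = norm P * sin a.

Definition on_ray (theta : R) (D : point) : Prop :=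
  exists t : R, 0 <= t /\ D = (t * cos theta, t * sin theta).

Definition midpoint (P Q : point) : point :=
  ((fst P + fst Q) / 2, (snd P + snd Q) / 2).

Definition tsquare_config (theta c : R) (D E : point) : Prop :=
  0 < c /\
  on_ray theta D /\
  dist (c, 1) D = 2 /\
  E = midpoint (c, 1) D /\
  fst E * (fst D - c) + snd E * (snd D - 1) = 0 /\
  c * snd E - fst E > 0.

(* Main.v *)
Require Import Defs.
From Stdlib Require Import Reals Lra Psatz.
Open Scope R_scope.

Lemma cube_inj (a b p q : R) : 0 < a -> 0 < b -> 0 < p -> 0 < q ->
  a^3 - 3*a*b^2 = p^3 - 3*p*q^2 -> 3*a^2*b - b^3 = 3*p^2*q - q^3 ->
  a = p /\ b = q.
Proof.
  intros ha hb hp hq h1 h2.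
  set (M := a^2-b^2+(a*p-b*q)+(p^2-q^2)).
  set (N := 2*a*b+(a*q+b*p)+2*p*q).
  assert (hN : 0 < N) by (unfold N; nra).
  assert (HRe : (a-p)*M - (b-q)*N = 0) by (unfold M, N; nra).
  assert (HIm : (a-p)*N + (b-q)*M = 0) by (unfold M, N; nra).
  assert (hMN : 0 < M*M + N*N) by nra.
  assert (e1 : (a-p)*(M*M+N*N) = M*((a-p)*M - (b-q)*N) + N*((a-p)*N + (b-q)*M)) by ring.
  assert (e2 : (b-q)*(M*M+N*N) = - N*((a-p)*M - (b-q)*N) + M*((a-p)*N + (b-q)*M)) by ring.
  rewrite HRe, HIm in e1. rewrite HRe, HIm in e2.
  split; nra.
Qed.

Lemma sqrt_eq2 (x : R) : sqrt x = 2 -> x = 4.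
Proof.
  intro h. destruct (Rle_or_lt x 0) as [hx|hx].
  - rewrite sqrt_neg_0 in h; lra.
  - rewrite <- (sqrt_sqrt x) by lra. rewrite h. ring.
Qed.

Theorem mainTheorem1 (theta : R) (Htheta : 0 < theta < 3 * PI / 2) :
  (exists (c : R) (D E : point), tsquare_config theta c D E) /\
  (forall (c : R) (D E : point), tsquare_config theta c D E ->
     polar_angle (c, 1) (theta / 3) /\ polar_angle E (2 * theta / 3)).
Proof.
  assert (hPI := PI_RGT_0).
  set (phi := theta / 3).
  assert (hp : 0 < cos phi) by (apply cos_gt_0; unfold phi; lra).
  assert (hq : 0 < sin phi) by (apply sin_gt_0; unfold phi; lra).
  assert (hc : sin phi ^ 2 + cos phi ^ 2 = 1) by (rewrite <- (sin2_cos2 phi); unfold Rsqr; ring).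
  assert (hth : theta = phi + phi + phi) by (unfold phi; field).
  assert (hu : cos theta = cos phi ^ 3 - 3 * cos phi * sin phi ^ 2).
  { rewrite hth, cos_plus, cos_plus, sin_plus. ring. }
  assert (hv : sin theta = 3 * cos phi ^ 2 * sin phi - sin phi ^ 3).
  { rewrite hth, sin_plus, cos_plus, sin_plus. ring. }
  assert (huv : sin theta ^ 2 + cos theta ^ 2 = 1) by (rewrite <- (sin2_cos2 theta); unfold Rsqr; ring).
  set (p := cos phi) in *. set (q := sin phi) in *.
  set (u := cos theta) in *. set (v := sin theta) in *.
  split.
  - exists (p / q), (1/q * u, 1/q * v), (midpoint (p/q, 1) (1/q * u, 1/q * v)).
    unfold tsquare_config, midpoint, Defs.dist, Defs.norm; cbn [fst snd].
    split; [apply Rdiv_lt_0_compat; lra|].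
    split; [exists (1/q); split; [apply Rlt_le, Rdiv_lt_0_compat; lra| reflexivity]|].
    split.
    { assert (Hu' : u = p - 4*p*q^2).
      { rewrite hu. replace (p ^ 3 - 3 * p * q ^ 2) with (p - 4*p*q^2 + p*(p^2+q^2-1)) by ring.
        replace (p^2+q^2-1) with 0 by lra. ring. }
      assert (Hv' : v = q + 2*q*(p^2-q^2)).
      { rewrite hv. replace (3 * p ^ 2 * q - q ^ 3) with (q + 2*q*(p^2-q^2) + q*(p^2+q^2-1)) by ring.
        replace (p^2+q^2-1) with 0 by lra. ring. }
      rewrite Hu', Hv'.
      replace ((1 / q * (p - 4 * p * q ^ 2) - p / q) ^ 2 + (1 / q * (q + 2 * q * (p ^ 2 - q ^ 2)) - 1) ^ 2)
        with (4 * (p^2+q^2)^2) by (field; lra).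
      replace (p^2+q^2) with 1 by lra.
      replace (4 * 1 ^ 2) with (2 ^ 2) by ring. apply sqrt_pow2; lra. }
    split; [reflexivity|].
    split.
    { replace ((p / q + 1 / q * u) / 2 * (1 / q * u - p / q) + (1 + 1 / q * v) / 2 * (1 / q * v - 1))
        with ((u^2+v^2 - p^2 - q^2)/(2*q^2)) by (field; lra).
      replace (u^2+v^2 - p^2 - q^2) with 0 by lra. field; lra. }
    { red; replace (p / q * ((1 + 1 / q * v) / 2) - (p / q + 1 / q * u) / 2)
        with ((p*v - q*u)/(2*q^2)) by (field; lra).
      rewrite hu, hv. apply Rdiv_lt_0_compat; [|nra]. replace (p * (3 * p ^ 2 * q - q ^ 3) - q * (p ^ 3 - 3 * p * q ^ 2)) with (2*p*q*(p^2+q^2)) by ring. replace (p^2+q^2) with 1 by lra. nra. }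
  - intros c D E [hc0 [[t [ht0 hD]] [hdist [hE [hperp hdet]]]]].
    subst D E. unfold Defs.dist, Defs.norm, midpoint in *; cbn [fst snd] in *.
    apply sqrt_eq2 in hdist.
    change (cos theta) with u in hperp, hdist, hdet |- *. change (sin theta) with v in hperp, hdist, hdet |- *.
    assert (ht2 : t^2 = c^2 + 1).
    { replace (t^2) with (t^2 * (v^2+u^2)) by (rewrite huv; ring). lra. }
    assert (ht : 0 < t) by nra.
    assert (hA : t*(c*u+v) = c^2 - 1).
    { replace (t^2) with (t^2 * (v^2+u^2)) in ht2 by (rewrite huv; ring). lra. }
    assert (hX : t*(c*v-u) > 0) by nra.
    assert (hX2 : (t*(c*v-u))^2 = (2*c)^2).
    { replace ((t*(c*v-u))^2) with (t^2*((c^2+1)*(v^2+u^2)) - (t*(c*u+v))^2) by ring.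
      rewrite huv, hA, ht2. ring. }
    assert (hB : t*(c*v-u) = 2*c).
    { assert ((t*(c*v-u) - 2*c)*(t*(c*v-u) + 2*c) = 0) by (replace ((t*(c*v-u) - 2*c)*(t*(c*v-u) + 2*c)) with ((t*(c*v-u))^2 - (2*c)^2) by ring; rewrite hX2; ring).
      destruct (Rmult_integral _ _ H); lra. }
    assert (hU : t*u*t^2 = c^3 - 3*c).
    { rewrite ht2. replace (t*u*(c^2+1)) with (c*(t*(c*u+v)) - t*(c*v-u)) by ring.
      rewrite hA, hB. ring. }
    assert (hV : t*v*t^2 = 3*c^2 - 1).
    { rewrite ht2. replace (t*v*(c^2+1)) with (t*(c*u+v) + c*(t*(c*v-u))) by ring.
      rewrite hA, hB. ring. }
    destruct (cube_inj (c/t) (1/t) p q) as [hap hbq].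
    + apply Rdiv_lt_0_compat; lra.
    + apply Rdiv_lt_0_compat; lra.
    + lra.
    + lra.
    + rewrite <- hu. apply (Rmult_eq_reg_r (t^3)); [|apply pow_nonzero; lra].
      replace (u * t^3) with (t*u*t^2) by ring. rewrite hU. field; lra.
    + rewrite <- hv. apply (Rmult_eq_reg_r (t^3)); [|apply pow_nonzero; lra].
      replace (v * t^3) with (t*v*t^2) by ring. rewrite hV. field; lra.
    + assert (hcp : c = t * p) by (rewrite <- hap; field; lra).
      assert (h1q : 1 = t * q) by (rewrite <- hbq; field; lra).
      assert (hnc : sqrt (c^2 + 1^2) = t).
      { replace (c^2+1^2) with (t^2) by lra. apply sqrt_pow2; lra. }
      split.
      * unfold polar_angle, Defs.norm; cbn [fst snd]. rewrite hnc. fold phi. fold p q.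
        split; [intro h; injection h; lra|].
        split; [unfold phi; lra|]. lra.
      * assert (h2 : 2 * theta / 3 = phi + phi) by (unfold phi; field).
        unfold polar_angle, Defs.norm; cbn [fst snd]. rewrite h2, cos_plus, sin_plus. fold p q.
        assert (hE1 : (c + t * u) / 2 = c * (p*p - q*q)).
        { rewrite hu. assert (e : p^2+q^2=1) by lra. rewrite hcp.
          transitivity (t*p*(p*p-q*q) + t*p*(1-(p^2+q^2))/2). field. rewrite e. field. }
        assert (hE2 : (1 + t * v) / 2 = c * (q*p + p*q)).
        { rewrite hv. assert (e : p^2+q^2=1) by lra.
          transitivity (c*(q*p+p*q) + (1 - t*q)/2 + t*q*(1-(p^2+q^2))/2 - (c - t*p)*(2*p*q));
          [field | rewrite e, <- hcp, <- h1q; field]. }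
        assert (hn : sqrt (((c + t * u) / 2)^2 + ((1 + t * v) / 2)^2) = c).
        { rewrite hE1, hE2.
          replace ((c * (p * p - q * q)) ^ 2 + (c * (q * p + p * q)) ^ 2) with (c^2 * (p^2+q^2)^2) by ring.
          replace (p^2+q^2) with 1 by lra. rewrite pow1, Rmult_1_r. apply sqrt_pow2; lra. }
        rewrite hn.
        split; [intro h; injection h; intros; nra|].
        split; [lra|]. split; lra.
Qed.
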